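(* Let $\tilde f$ be analytic on $[-1,1]$ and let $F=[f_{k,\ell}]$ be the coefficient matrix of $f(t,s)=\tilde f(t)\Theta(t-s)$. For every fixed $m\in\mathbb{Z}$, $|f_{\ell+m,\ell}|=O(1/\ell)$ as $\ell\to\infty$.
   Context: Let $\{p_k\}_{k\ge0}$ be the orthonormal Legendre polynomials on $[-1,1]$: $p_k$ has exact degree $k$, positive leading coefficient, and $\int_{-1}^1 p_k(t)p_\ell(t)\,dt=\delta_{k\ell}$. Let $\Theta$ be the Heaviside function, $\Theta(x)=0$ for $x<0$ and $\Theta(x)=1$ for $x\ge0$. The coefficient matrix of a bounded function $h$ on $[-1,1]^2$ is the infinite matrix $H=[h_{k,\ell}]_{k,\ell\ge0}$ with $h_{k,\ell}=\int_{-1}^1\int_{-1}^1 h(\tau,\rho)p_k(\tau)p_\ell(\rho)\,d\rho\,d\tau$. *)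

(* Defs.v *)
From Stdlib Require Import Reals ZArith.
From Coquelicot Require Import Coquelicot.
Open Scope R_scope.

Definition Heaviside (x : R) : R := if Rlt_dec x 0 then 0 else 1.

(* (P_n t, P_{n+1} t) for the classical Legendre polynomials (P_n(1) = 1),
   via Bonnet's recurrence (n+2) P_{n+2} = (2n+3) t P_{n+1} - (n+1) P_n. *)
Fixpoint legendre_pair (n : nat) (t : R) : R * R :=
  match n with
  | O => (1, t)
  | S n' => let (a, b) := legendre_pair n' t in
            (b, ((2 * INR n' + 3) * t * b - (INR n' + 1) * a) / (INR n' + 2))
  end.

Definition legendreP (n : nat) (t : R) : R := fst (legendre_pair n t).

Definition legendre_on (k : nat) (t : R) : R :=
  sqrt ((2 * INR k + 1) / 2) * legendreP k t.

Definition analytic_on_interval (f : R -> R) : Prop :=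
  forall x, -1 <= x <= 1 ->
    exists (a : nat -> R) (r : R), 0 < r /\
      forall y, Rabs (y - x) < r -> is_pseries a (y - x) (f y).

Definition coef_matrix (h : R -> R -> R) (k l : nat) : R :=
  RInt (fun tau => RInt (fun rho => h tau rho * legendre_on k tau * legendre_on l rho)
                        (-1) 1) (-1) 1.

(* Main.v *)
Require Import Defs.
From Stdlib Require Import Reals ZArith.
From Coquelicot Require Import Coquelicot.
From Stdlib Require Import Lra Lia Psatz.
Open Scope R_scope.


Ltac nz := repeat match goal with |- _ /\ _ => split end; intro; lra.
Ltac reqR := match goal with |- ?a = ?b => change (@eq R a b) end.

Lemma dminus (f g : R -> R) x a b : is_derive f x a -> is_derive g x b -> is_derive (fun y => f y - g y) x (a - b).
Proof. intros; apply (is_derive_minus f g); auto. Qed.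
Lemma dplus (f g : R -> R) x a b : is_derive f x a -> is_derive g x b -> is_derive (fun y => f y + g y) x (a + b).
Proof. intros; apply (is_derive_plus f g); auto. Qed.
Lemma dmult (f g : R -> R) x a b : is_derive f x a -> is_derive g x b -> is_derive (fun y => f y * g y) x (a * g x + f x * b).
Proof. intros; apply (is_derive_mult f g); auto. intros; apply Rmult_comm. Qed.
Lemma did x : is_derive (fun y : R => y) x 1.
Proof. exact (@is_derive_id R_AbsRing x). Qed.
Lemma dconst (c x : R) : is_derive (fun _ : R => c) x 0.
Proof. exact (@is_derive_const R_AbsRing _ c x). Qed.

Definition P n t := legendreP n t.

Lemma P_0 t : P 0 t = 1. Proof. reflexivity. Qed.
Lemma P_1 t : P 1 t = t. Proof. reflexivity. Qed.
Lemma P_SS n t : P (S (S n)) t =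
  ((2 * INR n + 3) * t * P (S n) t - (INR n + 1) * P n t) / (INR n + 2).
Proof.
  unfold P, legendreP. simpl.
  destruct (legendre_pair n t) as [a b]. simpl. reflexivity.
Qed.

Fixpoint D n t := match n with O => 0 | S m => t * D m t + INR (S m) * P m t end.

Lemma INR_S' n : INR (S n) = INR n + 1. Proof. apply S_INR. Qed.

Lemma core2 n t : (1 - t*t) * D (S n) t = INR (S n) * (P n t - t * P (S n) t).
Proof.
  induction n as [|n IH].
  - simpl. rewrite P_0, P_1. ring.
  - change (D (S (S n)) t) with (t * D (S n) t + INR (S (S n)) * P (S n) t).
    rewrite P_SS.
    assert (H2: INR n + 2 <> 0) by (pose proof (pos_INR n); lra).
    replace ((1 - t * t) * (t * D (S n) t + INR (S (S n)) * P (S n) t))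
      with (t * ((1 - t*t) * D (S n) t) + INR (S (S n)) * (1-t*t) * P (S n) t) by ring.
    rewrite IH. rewrite !S_INR. field. exact H2.
Qed.

Lemma core1 n t : t * D (S n) t - D n t = INR (S n) * P (S n) t.
Proof.
  destruct n as [|m].
  - simpl. rewrite P_0, P_1. ring.
  - change (D (S (S m)) t) with (t * D (S m) t + INR (S (S m)) * P (S m) t).
    replace (t * (t * D (S m) t + INR (S (S m)) * P (S m) t) - D (S m) t)
      with (- ((1 - t*t) * D (S m) t) + INR (S (S m)) * t * P (S m) t) by ring.
    rewrite core2, P_SS.
    assert (H2: INR m + 2 <> 0) by (pose proof (pos_INR m); lra).
    rewrite !S_INR. field. exact H2.
Qed.

Lemma Dstep n t : D (S (S n)) t - D n t = (2 * INR n + 3) * P (S n) t.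
Proof.
  change (D (S (S n)) t) with (t * D (S n) t + INR (S (S n)) * P (S n) t).
  pose proof (core1 n t). rewrite !S_INR in *. lra.
Qed.

Lemma P_derive_pair n t : is_derive (P n) t (D n t) /\ is_derive (P (S n)) t (D (S n)t).
Proof.
  induction n as [|n [IH1 IH2]].
  - split.
    + apply is_derive_ext with (fun _ => 1). intros; reflexivity.
      simpl. auto_derive; auto.
    + apply is_derive_ext with (fun t => t). intros; reflexivity.
      simpl. rewrite P_0. auto_derive; auto; ring.
  - split; [exact IH2|].
    apply is_derive_ext with (fun t => ((2 * INR n + 3) * (t * P (S n) t) - (INR n + 1) * P n t) / (INR n + 2)).
    { intros t0. cbv beta. rewrite P_SS. match goal with |- ?a = ?b => change (@eq R a b) end. field. pose proof (pos_INR n); lra. }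
    evar (d : R).
    replace (D (S (S n)) t) with d.
    + unfold Rdiv. apply is_derive_ext with (fun t => / (INR n + 2) * ((2 * INR n + 3) * (t * P (S n) t) - (INR n + 1) * P n t)).
      { intros; reqR; ring. }
      apply is_derive_scal. apply dminus.
      * apply is_derive_scal. apply (dmult (fun t => t) (P (S n))). apply did. exact IH2.
      * apply is_derive_scal. exact IH1.
    + unfold d.
      pose proof (core1 n t). pose proof (Dstep n t).
      change (D (S (S n)) t) with (t * D (S n) t + INR (S (S n)) * P (S n) t) in H0.
      rewrite !S_INR in *.
      assert (H2: INR n + 2 <> 0) by (pose proof (pos_INR n); lra).
      apply Rmult_eq_reg_l with (INR n + 2); [|exact H2].
      rewrite <- Rmult_assoc, Rinv_r; [|exact H2]. reqR.
      change (D (S (S n)) t) with (t * D (S n) t + INR (S (S n)) * P (S n) t). rewrite !S_INR.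
      replace (t * D (S n) t) with (D n t + (INR n + 1) * P (S n) t) by lra. ring.
Qed.

Lemma P_derive n t : is_derive (P n) t (D n t).
Proof. apply P_derive_pair. Qed.

Lemma cmult (f g : R -> R) x : continuous f x -> continuous g x -> continuous (fun y => f y * g y) x.
Proof. intros; apply (continuous_mult f g); auto. Qed.
Lemma cplus (f g : R -> R) x : continuous f x -> continuous g x -> continuous (fun y => f y + g y) x.
Proof. intros; apply (continuous_plus f g); auto. Qed.
Lemma cminus (f g : R -> R) x : continuous f x -> continuous g x -> continuous (fun y => f y - g y) x.
Proof. intros; apply (continuous_minus f g); auto. Qed.
Lemma cid x : continuous (fun y : R => y) x.
Proof. apply continuous_id. Qed.
Lemma cconst (c x : R) : continuous (fun _ : R => c) x.
Proof. apply continuous_const. Qed.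

Lemma contP n x : continuous (P n) x.
Proof. apply (@ex_derive_continuous R_AbsRing R_NormedModule (P n) x). eexists. apply P_derive. Qed.

Lemma contD n x : continuous (D n) x.
Proof.
  induction n as [|n IH].
  - simpl. apply cconst.
  - apply (cplus (fun y => y * D n y) (fun y => INR (S n) * P n y)).
    + apply (cmult (fun y => y)); [apply cid | exact IH].
    + apply (cmult (fun _ => INR (S n))); [apply cconst | apply contP].
Qed.

Lemma P_pm1 n : (P n 1 = 1 /\ P (S n) 1 = 1) /\ (P n (-1) = (-1)^n /\ P (S n) (-1) = (-1)^(S n)).
Proof.
  induction n as [|n [[A1 A2] [B1 B2]]].
  - rewrite !P_0, !P_1. simpl. lra.
  - assert (H2: INR n + 2 <> 0) by (pose proof (pos_INR n); lra).
    split; split; auto.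
    + rewrite P_SS, A1, A2. field. exact H2.
    + rewrite P_SS, B1, B2. simpl. field. exact H2.
Qed.

Lemma Dstep' n t : D (S (S n)) t - D n t = (2 * INR (S n) + 1) * P (S n) t.
Proof. rewrite Dstep, S_INR. ring. Qed.

Lemma W_derive n t : is_derive (fun y => (1 - y*y) * D n y) t (- (INR n * (INR n + 1)) * P n t).
Proof.
  destruct n as [|n].
  - simpl. apply is_derive_ext with (fun _ => 0). { intros; reqR; ring. }
    replace (- (0 * (0 + 1)) * P 0 t) with 0 by ring. apply dconst.
  - apply is_derive_ext with (fun y => INR (S n) * (P n y - y * P (S n) y)).
    { intros; reqR; rewrite core2; ring. }
    evar (d : R). replace (- (INR (S n) * (INR (S n) + 1)) * P (S n) t) with d.
    + apply is_derive_scal. apply dminus. apply P_derive.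
      apply (dmult (fun y => y)). apply did. apply P_derive.
    + unfold d. pose proof (core1 n t). rewrite !S_INR in *. nra.
Qed.

Definition call (f : R -> R) := forall x, continuous f x.

Lemma exR (f : R -> R) a b : call f -> ex_RInt f a b.
Proof. intros H. apply (@ex_RInt_continuous R_CompleteNormedModule f a b). intros; apply H. Qed.

Lemma RInt_lin (h f g : R -> R) a b (c d : R) : call f -> call g ->
  (forall t, h t = c * f t + d * g t) ->
  RInt h a b = c * RInt f a b + d * RInt g a b.
Proof.
  intros Hf Hg Hh.
  apply is_RInt_unique.
  apply is_RInt_ext with (fun t => plus (scal c (f t)) (scal d (g t))).
  { intros; rewrite Hh; reflexivity. }
  apply (@is_RInt_plus R_NormedModule (fun t => scal c (f t)) (fun t => scal d (g t))).
  - apply (@is_RInt_scal R_NormedModule). apply (@RInt_correct R_CompleteNormedModule). apply exR; auto.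
  - apply (@is_RInt_scal R_NormedModule). apply (@RInt_correct R_CompleteNormedModule). apply exR; auto.
Qed.

Lemma callP n : call (P n). Proof. intro; apply contP. Qed.
Lemma callD n : call (D n). Proof. intro; apply contD. Qed.
Lemma callM f g : call f -> call g -> call (fun y => f y * g y).
Proof. intros A B x; apply cmult; auto. Qed.
Lemma callPl f g : call f -> call g -> call (fun y => f y + g y).
Proof. intros A B x; apply cplus; auto. Qed.
Lemma callMi f g : call f -> call g -> call (fun y => f y - g y).
Proof. intros A B x; apply cminus; auto. Qed.
Lemma callOpp f : call f -> call (fun y => - f y).
Proof. intros A x. apply (continuous_opp f); auto. Qed.
Lemma callid : call (fun y => y). Proof. intro; apply cid. Qed.
Lemma callc c : call (fun _ => c). Proof. intro; apply cconst. Qed.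

Ltac callt := lazymatch goal with
  | |- call (fun y => @?f y * @?g y) => apply (callM f g); callt
  | |- call (fun y => @?f y - @?g y) => apply (callMi f g); callt
  | |- call (fun y => @?f y + @?g y) => apply (callPl f g); callt
  | |- call (fun y => - @?f y) => apply (callOpp f); callt
  | |- call (fun y => y) => exact callid
  | |- call (fun y => P ?n y) => exact (callP n)
  | |- call (fun y => D ?n y) => exact (callD n)
  | |- call (fun _ => ?c) => exact (callc c)
  | |- call (P ?n) => exact (callP n)
  | |- call (D ?n) => exact (callD n)
  | |- _ => idtac
  end.

Definition J m n := RInt (fun t => P m t * P n t) (-1) 1.
Definition X m n := RInt (fun t => D m t * ((1 - t*t) * D n t)) (-1) 1.

Lemma XJ m n : X m n - INR n * (INR n + 1) * J m n = 0.
Proof.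
  assert (E : RInt (fun y => D m y * ((1 - y*y) * D n y) + P m y * (- (INR n * (INR n + 1)) * P n y)) (-1) 1 = 0).
  { apply is_RInt_unique.
    replace 0 with (minus (P m 1 * ((1 - 1*1) * D n 1)) (P m (-1) * ((1 - (-1)*(-1)) * D n (-1)))).
    2:{ unfold minus, plus, opp; simpl. ring. }
    apply (is_RInt_derive (fun y => P m y * ((1 - y*y) * D n y))).
    - intros x _. apply (dmult (P m) (fun y => (1 - y*y) * D n y)). apply P_derive. apply W_derive.
    - intros x _. apply cplus.
      + apply cmult. apply contD. apply (cmult (fun y => 1 - y*y)). apply cminus. apply cconst.
        apply cmult; apply cid. apply contD.
      + apply cmult. apply contP. apply (cmult (fun _ => _)). apply cconst. apply contP. }
  rewrite (RInt_lin _ (fun t => D m t * ((1 - t*t) * D n t)) (fun t => P m t * P n t) _ _ 1 (- (INR n * (INR n + 1)))) in E.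
  - unfold X, J. lra.
  - callt.
  - callt.
  - intros; ring.
Qed.

Lemma ortho m n : m <> n -> J m n = 0.
Proof.
  intros Hmn.
  pose proof (XJ m n) as A. pose proof (XJ n m) as B.
  assert (HX : X m n = X n m). { unfold X. apply RInt_ext. intros; reqR; ring. }
  assert (HJ : J m n = J n m). { unfold J. apply RInt_ext. intros; reqR; ring. }
  assert (Hne : INR n * (INR n + 1) <> INR m * (INR m + 1)).
  { intro E. apply Hmn. rewrite <- !S_INR, <- !mult_INR in E. apply INR_eq in E. nia. }
  rewrite HX in A. rewrite <- HJ in B.
  assert ((INR n * (INR n + 1) - INR m * (INR m + 1)) * J m n = 0) by lra.
  apply Rmult_integral in H. destruct H; [lra | auto].
Qed.

Definition K n := RInt (fun t => t * P (S n) t * P n t) (-1) 1.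

Lemma KI n : (2*INR n + 3) * K n = (INR n + 1) * J n n.
Proof.
  assert (H2: INR n + 2 <> 0) by (pose proof (pos_INR n); lra).
  pose proof (ortho (S (S n)) n ltac:(lia)) as O.
  unfold J in O.
  rewrite (RInt_lin _ (fun t => t * P (S n) t * P n t) (fun t => P n t * P n t) _ _
     ((2 * INR n + 3) / (INR n + 2)) (- (INR n + 1) / (INR n + 2))) in O.
  - fold (K n) in O. unfold J.
    apply Rmult_eq_reg_l with (/ (INR n + 2)). 2:{ apply Rinv_neq_0_compat; auto. }
    unfold Rdiv in O. lra.
  - callt.
  - callt.
  - intros; rewrite P_SS. field. auto.
Qed.

Lemma J_SS n : J (S (S n)) (S (S n)) = (2 * INR n + 3) / (INR n + 2) * K (S n).
Proof.
  assert (H2: INR n + 2 <> 0) by (pose proof (pos_INR n); lra).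
  pose proof (ortho n (S (S n)) ltac:(lia)) as O.
  unfold J in *.
  rewrite (RInt_lin _ (fun t => t * P (S (S n)) t * P (S n) t) (fun t => P n t * P (S (S n)) t) _ _
     ((2 * INR n + 3) / (INR n + 2)) (- (INR n + 1) / (INR n + 2))).
  - fold (K (S n)). rewrite O. reqR. ring.
  - callt.
  - callt.
  - intros. rewrite P_SS at 1. field. auto.
Qed.

Lemma J_0 : J 0 0 = 2.
Proof.
  unfold J. rewrite (RInt_ext _ (fun _ => 1)). 2:{ intros; rewrite P_0; reqR; ring. }
  rewrite RInt_const. unfold scal; simpl. unfold mult; simpl. reqR. ring.
Qed.

Lemma Jnorm_pair n : J n n = 2 / (2 * INR n + 1) /\ J (S n) (S n) = 2 / (2 * INR (S n) + 1).
Proof.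
  induction n as [|n [A B]].
  - split.
    + rewrite J_0. change (INR 0) with 0. reqR. field.
    + assert (E : J 1 1 = K 0).
      { unfold J, K. apply RInt_ext. intros. rewrite P_0, P_1. reqR. ring. }
      pose proof (KI 0) as H. rewrite J_0 in H. rewrite E. change (INR 0) with 0 in H. change (INR 1) with 1. reqR. lra.
  - split; [exact B|].
    rewrite J_SS. pose proof (KI (S n)) as H. rewrite B in H.
    revert H. rewrite !S_INR. generalize (pos_INR n). generalize (K (S n)). generalize (INR n).
    intros x k Hx Hk. clear A B. reqR.
    assert (k = (x + 1 + 1) * (2 / (2 * (x + 1) + 1)) / (2 * (x + 1) + 3)).
    { apply Rmult_eq_reg_l with (2 * (x + 1) + 3). rewrite Hk. field. nz. nz. }
    subst k. field. nz.
Qed.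

Lemma Jnorm n : J n n = 2 / (2 * INR n + 1).
Proof. exact (proj1 (Jnorm_pair n)). Qed.

Lemma lo_eq k t : legendre_on k t = sqrt ((2 * INR k + 1) / 2) * P k t.
Proof. reflexivity. Qed.

Lemma Qformula n tau : RInt (legendre_on (S n)) (-1) tau =
  sqrt ((2 * INR (S n) + 1) / 2) * (P (S (S n)) tau - P n tau) / (2 * INR (S n) + 1).
Proof.
  set (s := sqrt ((2 * INR (S n) + 1) / 2)).
  assert (Hc : 2 * INR (S n) + 1 <> 0) by (pose proof (pos_INR (S n)); lra).
  apply is_RInt_unique.
  set (F := fun y => s * (P (S (S n)) y - P n y) / (2 * INR (S n) + 1)).
  replace (s * (P (S (S n)) tau - P n tau) / (2 * INR (S n) + 1)) with (minus (F tau) (F (-1))).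
  2:{ unfold minus, plus, opp; simpl. unfold F.
      destruct (P_pm1 n) as [_ [B1 _]]. destruct (P_pm1 (S n)) as [_ [_ B2]].
      rewrite B1, B2. simpl. reqR. field. exact Hc. }
  apply (is_RInt_derive F).
  - intros x _. unfold F.
    apply is_derive_ext with (fun y => (s / (2 * INR (S n) + 1)) * (P (S (S n)) y - P n y)).
    { intros; reqR; field; exact Hc. }
    replace (legendre_on (S n) x) with ((s / (2 * INR (S n) + 1)) * (D (S (S n)) x - D n x)).
    + apply is_derive_scal. apply dminus; apply P_derive.
    + rewrite Dstep', lo_eq. fold s. field. exact Hc.
  - intros x _. intro; apply (callM (fun _ => s) (P (S n))). apply callc. apply callP.
Qed.

Lemma Heav_pos x : 0 < x -> Heaviside x = 1.
Proof. intros. unfold Heaviside. destruct (Rlt_dec x 0); [lra|auto]. Qed.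
Lemma Heav_neg x : x < 0 -> Heaviside x = 0.
Proof. intros. unfold Heaviside. destruct (Rlt_dec x 0); [auto|lra]. Qed.

Lemma inner (a b tau : R) (g : R -> R) : call g -> -1 <= tau <= 1 ->
  RInt (fun rho => a * Heaviside (tau - rho) * b * g rho) (-1) 1 = a * b * RInt g (-1) tau.
Proof.
  intros Hg Ht.
  set (f := fun rho => a * Heaviside (tau - rho) * b * g rho).
  assert (E1 : forall x, Rmin (-1) tau < x < Rmax (-1) tau -> (fun rho => (a*b) * g rho) x = f x).
  { intros x Hx. rewrite Rmin_left in Hx by lra. rewrite Rmax_right in Hx by lra.
    unfold f. rewrite Heav_pos by lra. ring. }
  assert (E2 : forall x, Rmin tau 1 < x < Rmax tau 1 -> (fun _ => 0) x = f x).
  { intros x Hx. rewrite Rmin_left in Hx by lra. rewrite Rmax_right in Hx by lra.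
    unfold f. rewrite Heav_neg by lra. ring. }
  assert (X1 : ex_RInt f (-1) tau).
  { apply (ex_RInt_ext _ _ _ _ E1). apply exR. callt. exact Hg. }
  assert (X2 : ex_RInt f tau 1).
  { apply (ex_RInt_ext _ _ _ _ E2). apply exR. callt. }
  rewrite <- (RInt_Chasles f (-1) tau 1 X1 X2).
  rewrite <- (RInt_ext _ _ _ _ E1), <- (RInt_ext _ _ _ _ E2).
  rewrite RInt_const.
  rewrite (RInt_lin (fun rho => a * b * g rho) g g (-1) tau (a*b) 0); auto.
  2:{ intros; ring. }
  unfold plus, scal; simpl. unfold mult; simpl. reqR. ring.
Qed.


Lemma pseries_bound (a : nat -> R) z l : is_pseries a z l -> exists M, forall n, Rabs (a n * z ^ n) <= M.
Proof.
  intros H.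
  assert (L : is_lim_seq (fun k => scal (pow_n z k) (a k)) 0).
  { apply ex_series_lim_0. exists l. exact H. }
  destruct (@filterlim_bounded R_AbsRing R_NormedModule (fun k => scal (pow_n z k) (a k))) as [M HM].
  { exists 0. exact L. }
  exists M. intros n. specialize (HM n).
  unfold norm in HM; simpl in HM. unfold scal in HM; simpl in HM. unfold mult in HM; simpl in HM.
  rewrite pow_n_pow in HM. rewrite Rmult_comm. exact HM.
Qed.

Lemma analytic_cont (ft : R -> R) : analytic_on_interval ft ->
  forall x, -1 <= x <= 1 -> continuous ft x.
Proof.
  intros Han x Hx.
  destruct (Han x Hx) as [a [r [Hr Hs]]].
  assert (Hz : Rabs ((x + r/2) - x) < r).
  { replace (x + r/2 - x) with (r/2) by ring. rewrite Rabs_pos_eq; lra. }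
  destruct (pseries_bound a _ _ (Hs _ Hz)) as [M HM].
  assert (HCV : Rbar_le (r/2) (CV_radius a)).
  { destruct (CV_radius_bounded a) as [Hub _]. apply Hub. exists M.
    intros n. replace (r/2) with (x + r/2 - x) by ring. apply HM. }
  set (g := fun y => PSeries a (y - x)).
  apply continuous_ext_loc with g.
  - assert (Hp : 0 < r/2) by lra.
    exists (mkposreal _ Hp). intros y Hy. unfold ball in Hy; simpl in Hy.
    unfold AbsRing_ball, abs, minus, plus, opp in Hy; simpl in Hy.
    unfold g. apply is_pseries_unique. apply Hs.
    replace (y - x) with (y + - x) by ring. lra.
  - apply continuity_pt_filterlim. unfold g.
    apply (continuity_pt_comp (fun y => y - x) (PSeries a)).
    + apply continuity_pt_minus. apply continuity_pt_id. apply continuity_pt_const. intros u v; auto.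
    + apply PSeries_continuity. replace (x - x) with 0 by ring. rewrite Rabs_R0.
      apply Rbar_lt_le_trans with (r/2). simpl. lra. exact HCV.
Qed.


Lemma call_lo k : call (legendre_on k).
Proof. intro x. apply (cmult (fun _ => _) (P k)). apply cconst. apply contP. Qed.

Lemma pointwise (f p A B M L s : R) : Rabs f <= M -> 0 < L -> 0 <= s -> s * s = (2*L+1)/2 ->
  Rabs (f * p * ((s / (2*L+1)) * (A - B))) <=
  (M / (2*L)) * (p * p) + (M * L / (2 * (2*L+1))) * (A * A + B * B).
Proof.
  intros Hf HL Hs Hss.
  set (Q := (s / (2*L+1)) * (A - B)).
  assert (HQ : Q * Q <= (A*A + B*B) / (2*L+1)).
  { unfold Q. replace ((s / (2 * L + 1)) * (A - B) * ((s / (2 * L + 1)) * (A - B)))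
      with ((s*s) * ((A-B)*(A-B)) / ((2*L+1)*(2*L+1))) by (field; lra).
    rewrite Hss.
    replace ((2 * L + 1) / 2 * ((A - B) * (A - B)) / ((2 * L + 1) * (2 * L + 1)))
      with (((A - B) * (A - B)) * / (2 * (2*L+1))) by (field; lra).
    replace ((A * A + B * B) / (2 * L + 1)) with ((2 * (A*A + B*B)) * / (2 * (2*L+1))) by (field; lra).
    apply Rmult_le_compat_r. left. apply Rinv_0_lt_compat. lra.
    pose proof (Rle_0_sqr (A+B)). unfold Rsqr in *. lra. }
  assert (HpQ : Rabs p * Rabs Q <= (p*p / L + L * (Q*Q)) / 2).
  { apply Rmult_le_reg_r with (2 * L). lra.
    replace ((p * p / L + L * (Q * Q)) / 2 * (2 * L)) with (Rabs p * Rabs p + L * L * (Rabs Q * Rabs Q)).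
    2:{ rewrite <- !Rabs_mult. rewrite !Rabs_pos_eq by nra. field. lra. }
    pose proof (Rle_0_sqr (Rabs p - L * Rabs Q)). unfold Rsqr in *. lra. }
  rewrite !Rabs_mult. fold Q.
  assert (0 <= M) by (pose proof (Rabs_pos f); lra).
  apply Rle_trans with (M * (Rabs p * Rabs Q)).
  { rewrite Rmult_assoc. apply Rmult_le_compat_r. apply Rmult_le_pos; apply Rabs_pos. exact Hf. }
  apply Rle_trans with (M * ((p*p / L + L * ((A*A + B*B) / (2*L+1))) / 2)).
  { apply Rmult_le_compat_l; auto. apply Rle_trans with (1 := HpQ).
    apply Rmult_le_compat_r. lra. apply Rplus_le_compat_l. apply Rmult_le_compat_l; lra. }
  right. field. lra.
Qed.

Lemma final_alg (M : R) (n : nat) : 0 <= M ->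
  M / (2 * INR (S n)) * 1 + M * INR (S n) / (2 * (2 * INR (S n) + 1)) *
    (2 / (2 * INR (S (S n)) + 1) + 2 / (2 * INR n + 1)) <= 2 * M / INR (S n).
Proof.
  intros HM. rewrite !S_INR. pose proof (pos_INR n) as Hn. generalize dependent (INR n). intros x Hx.
  assert (E1 : 2 / (2 * (x + 1 + 1) + 1) <= 2 / (x + 1)).
  { apply Rmult_le_compat_l. lra. apply Rinv_le_contravar; lra. }
  assert (E2 : 2 / (2 * x + 1) <= 2 / (x + 1)).
  { apply Rmult_le_compat_l. lra. apply Rinv_le_contravar; lra. }
  apply Rle_trans with (M / (2 * (x+1)) * 1 + M * (x+1) / (2 * (2 * (x+1) + 1)) * (2/(x+1) + 2/(x+1))).
  { apply Rplus_le_compat_l. apply Rmult_le_compat_l.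
    apply Rmult_le_pos. apply Rmult_le_pos; lra. left; apply Rinv_0_lt_compat; lra. lra. }
  apply Rmult_le_reg_r with (2 * (x+1) * (2*(x+1)+1)). nra.
  field_simplify; try lra.
  nra.
Qed.

Theorem corollary3p3 (ft : R -> R) (m : Z) :
  analytic_on_interval ft ->
  exists (C : R) (L : nat),
    forall l : nat, (L <= l)%nat ->
      Rabs (coef_matrix (fun t s => ft t * Heaviside (t - s))
                        (Z.to_nat (Z.of_nat l + m)) l) <= C / INR l.
Proof.
  intros Han.
  pose proof (analytic_cont ft Han) as Hc.
  destruct (@bounded_continuity R_AbsRing R_NormedModule ft (-1) 1) as [M HM].
  { intros x Hx. exact (Hc x Hx). }
  assert (HM' : forall x, -1 <= x <= 1 -> Rabs (ft x) <= M).
  { intros x Hx. left. exact (HM x Hx). }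
  assert (M0 : 0 <= M). { pose proof (HM' 0 ltac:(lra)). pose proof (Rabs_pos (ft 0)). lra. }
  exists (2 * M), 1%nat. intros l Hl.
  destruct l as [|n]; [lia|].
  set (k := Z.to_nat (Z.of_nat (S n) + m)). clearbody k.
  set (L := INR (S n)).
  assert (HL : 0 < L) by (unfold L; rewrite S_INR; pose proof (pos_INR n); lra).
  set (s := sqrt ((2 * L + 1) / 2)).
  assert (Hs : 0 <= s) by apply sqrt_pos.
  assert (Hss : s * s = (2 * L + 1) / 2) by (apply sqrt_sqrt; lra).
  set (G := fun tau => ft tau * legendre_on k tau * ((s / (2*L+1)) * (P (S (S n)) tau - P n tau))).
  unfold coef_matrix.
  rewrite (RInt_ext _ G).
  2:{ intros tau Htau. rewrite Rmin_left in Htau by lra. rewrite Rmax_right in Htau by lra.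
      rewrite (inner (ft tau) (legendre_on k tau) tau (legendre_on (S n))).
      - unfold G. rewrite Qformula. fold L. fold s. reqR. field. lra.
      - apply call_lo.
      - lra. }
  set (ck := (2 * INR k + 1) / 2).
  set (H := fun t => (M / (2*L)) * (ck * (P k t * P k t)) +
                     (M * L / (2 * (2*L+1))) * (P (S (S n)) t * P (S (S n)) t + P n t * P n t)).
  assert (GC : forall x, -1 <= x <= 1 -> continuous G x).
  { intros x Hx. unfold G. apply cmult. apply cmult. apply Hc; auto. apply call_lo.
    assert (callQ : call (fun tau => (s / (2*L+1)) * (P (S (S n)) tau - P n tau))) by callt.
    apply callQ. }
  assert (exG : ex_RInt G (-1) 1).
  { apply (@ex_RInt_continuous R_CompleteNormedModule). intros z Hz.
    rewrite Rmin_left in Hz by lra. rewrite Rmax_right in Hz by lra. auto. }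
  assert (exAG : ex_RInt (fun t => Rabs (G t)) (-1) 1).
  { apply (@ex_RInt_continuous R_CompleteNormedModule). intros z Hz.
    rewrite Rmin_left in Hz by lra. rewrite Rmax_right in Hz by lra.
    apply continuous_Rabs_comp. auto. }
  assert (callH : call H). { unfold H. callt. }
  apply Rle_trans with (RInt (fun t => Rabs (G t)) (-1) 1).
  { apply abs_RInt_le. lra. exact exG. }
  apply Rle_trans with (RInt H (-1) 1).
  { apply RInt_le. lra. exact exAG. apply exR. exact callH.
    intros x Hx. unfold G, H.
    replace (ck * (P k x * P k x)) with (legendre_on k x * legendre_on k x).
    2:{ rewrite !lo_eq. unfold ck.
        assert (Hq : sqrt ((2 * INR k + 1) / 2) * sqrt ((2 * INR k + 1) / 2) = (2 * INR k + 1) / 2).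
        { apply sqrt_sqrt. pose proof (pos_INR k). lra. }
        assert (X : forall a b : R, a * b * (a * b) = (a * a) * (b * b)) by (intros; ring).
        first [ (rewrite X, Hq; reflexivity) | (symmetry; rewrite X, Hq; reflexivity) ]. }
    apply pointwise; auto. apply HM'. lra. }
  rewrite (RInt_lin H (fun t => ck * (P k t * P k t))
            (fun t => P (S (S n)) t * P (S (S n)) t + P n t * P n t) _ _ (M / (2*L)) (M * L / (2 * (2*L+1)))).
  3: callt. 3: callt. 3: (intros; reflexivity).
  2: (apply (callM (fun _ => _)); callt).
  rewrite (RInt_lin (fun t => ck * (P k t * P k t)) (fun t => P k t * P k t) (fun t => P k t * P k t) _ _ ck 0).
  2, 3: callt. 2: (intros; reqR; ring).
  rewrite (RInt_lin (fun t => P (S (S n)) t * P (S (S n)) t + P n t * P n t)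
     (fun t => P (S (S n)) t * P (S (S n)) t) (fun t => P n t * P n t) _ _ 1 1).
  2, 3: callt. 2: (intros; reqR; ring).
  fold (J k k). fold (J (S (S n)) (S (S n))). fold (J n n). rewrite !Jnorm.
  replace (ck * (2 / (2 * INR k + 1)) + 0 * (2 / (2 * INR k + 1))) with 1.
  2:{ unfold ck. field. pose proof (pos_INR k). lra. }
  replace (1 * (2 / (2 * INR (S (S n)) + 1)) + 1 * (2 / (2 * INR n + 1)))
    with (2 / (2 * INR (S (S n)) + 1) + 2 / (2 * INR n + 1)) by ring.
  unfold L. apply final_alg. exact M0.
Qed.
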